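(* For any positive integer $n$ there exists an $n$-vertex graph which is $(2^{r+8}\log n,\, r)$-locally Ramsey for all $r$.
   Context: All logarithms are base $2$. For a graph $G$ and reals $m,r>0$ (not necessarily integers), $G$ is called $(m,r)$-locally Ramsey if every set of at least $m$ vertices of $G$ contains both a clique and an independent set of size at least $r$. *)

(* Defs.v *)
From HB Require Import structures.
From mathcomp Require Import all_boot all_order all_algebra.
From mathcomp Require Import reals exp.
Set Implicit Arguments. Unset Strict Implicit. Unset Printing Implicit Defensive.
Import Order.TTheory GRing.Theory Num.Theory.
Local Open Scope ring_scope.

Definition simple_graph (T : finType) (e : rel T) : Prop :=
  irreflexive e /\ symmetric e.

Definition is_clique (T : finType) (e : rel T) (S : {set T}) : Prop :=
  forall x y, x \in S -> y \in S -> x != y -> e x y.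

Definition is_independent (T : finType) (e : rel T) (S : {set T}) : Prop :=
  forall x y, x \in S -> y \in S -> ~~ e x y.

Definition log2 (R : realType) (x : R) : R := ln x / ln 2.

Definition locally_ramsey (R : realType) (T : finType) (e : rel T) (m r : R) : Prop :=
  forall A : {set T}, m <= (#|A|)%:R ->
    (exists2 C : {set T}, C \subset A & is_clique e C /\ r <= (#|C|)%:R) /\
    (exists2 I : {set T}, I \subset A & is_independent e I /\ r <= (#|I|)%:R).

(* Main.v *)
From HB Require Import structures.
Require Import Defs.
From mathcomp Require Import all_boot all_order all_algebra.
From mathcomp Require Import reals exp sequences.
From mathcomp Require Import ring lra zify.
Import Order.TTheory GRing.Theory Num.Theory.
Local Open Scope ring_scope.
Set Implicit Arguments. Unset Strict Implicit. Unset Printing Implicit Defensive.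

Section Num.
Variable R : realType.

Lemma inv_le_exp1 (e : R) : 0 <= e -> e <= 1/2 -> (1 - e ^+ 2)^-1 <= expR (2 * e ^+ 2).
Proof.
move=> e0 e1.
have h1 : 0 < 1 - e ^+ 2 by nra.
rewrite -div1r ler_pdivrMr //.
have H := expR_ge1Dx (2 * e ^+ 2).
have H2 : 0 <= (expR (2 * e ^+ 2) - (1 + 2 * e ^+ 2)) * (1 - e ^+ 2).
  by apply: mulr_ge0; lra.
have H3 : 0 <= e ^+ 2 * (1 - 2 * e ^+ 2) by apply: mulr_ge0; nra.
nra.
Qed.

Lemma inv_le_exp2 (e : R) : 0 <= e -> e <= 1/2 -> (1 + e)^-1 <= expR (e ^+ 2 - e).
Proof.
move=> e0 e1.
have h1 : 0 < 1 + e by nra.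
rewrite -div1r ler_pdivrMr //.
have H := expR_ge1Dx (e ^+ 2 - e).
have H2 : 0 <= (expR (e ^+ 2 - e) - (1 + (e ^+ 2 - e))) * (1 + e).
  by apply: mulr_ge0; lra.
have H3 : 0 <= e ^+ 3 by apply: exprn_ge0.
nra.
Qed.

Lemma powle (x y : R) k : 0 <= x -> x <= y -> x ^+ k <= y ^+ k.
Proof. by move=> x0 xy; apply: lerXn2r; rewrite // nnegrE //; apply: le_trans xy. Qed.

Lemma tail_exp (m D : nat) (e l : R) : 0 <= e -> e <= 1/2 ->
  l = (1 - e) / (1 + e) ->
  ((1 + l) / 2) ^+ (m + m + D) / l ^+ m <=
    expR ((m + m + D)%:R * e ^+ 2 - D%:R * e).
Proof.
move=> e0 e1 Hl.
have a0 : 0 < 1 + e by lra.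
have b0 : 0 < 1 - e by lra.
have Ex : (1 + l) / 2 = (1 + e)^-1.
  have h' : 1 + e != 0 by lra.
  by rewrite Hl; field.
have El : l^-1 = (1 + e) / (1 - e).
  by rewrite Hl invf_div.
rewrite Ex -exprVn El !exprD.
have -> : (1 + e)^-1 ^+ m * (1 + e)^-1 ^+ m * (1 + e)^-1 ^+ D * ((1 + e) / (1 - e)) ^+ m
   = ((1 - e ^+ 2)^-1) ^+ m * (1 + e)^-1 ^+ D.
  have h' : 1 + e != 0 by lra.
  have h'' : 1 - e != 0 by lra.
  have HC : (1 - e ^+ 2)^-1 = (1 + e)^-1 * (1 + e)^-1 * ((1 + e) / (1 - e)).
    have h3 : 1 - e ^+ 2 != 0 by nra.
    by field; rewrite h' h'' h3.
  by rewrite HC !exprMn; ring.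
have -> : (m + m + D)%:R * e ^+ 2 - D%:R * e = m%:R * (2 * e ^+ 2) + D%:R * (e ^+ 2 - e).
  by rewrite !natrD; ring.
rewrite expRD (expRM_natl m) (expRM_natl D).
have c0 : 0 < 1 - e ^+ 2 by nra.
apply: ler_pM.
- by apply: exprn_ge0; rewrite invr_ge0; apply: ltW.
- by apply: exprn_ge0; rewrite invr_ge0; apply: ltW.
- by apply: powle; [rewrite invr_ge0; apply: ltW | exact: (inv_le_exp1 e0 e1)].
- by apply: powle; [rewrite invr_ge0; apply: ltW | exact: (inv_le_exp2 e0 e1)].
Qed.

Lemma step7 (u N D E L : R) : 0 < N -> 2 * N = u * (u - 1) -> u * E <= 2 * D ->
  0 <= E -> 16 * u * L <= E ^+ 2 -> 2 <= u -> 0 <= L ->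
  N * (D / (2 * N)) ^+ 2 - D * (D / (2 * N)) <= - (2 * u * L).
Proof.
move=> N0 HN HD E0 HE u2 L0.
have N0' : N != 0 by lra.
have -> : N * (D / (2 * N)) ^+ 2 - D * (D / (2 * N)) = - (D ^+ 2 / (4 * N)).
  by field.
rewrite lerN2 ler_pdivlMr; last by lra.
have D0 : 0 <= D by nra.
have H1 : (u * E) ^+ 2 <= (2 * D) ^+ 2 by apply: powle => //; nra.
have H2 : u ^+ 2 * (16 * u * L) <= u ^+ 2 * E ^+ 2 by apply: ler_wpM2l => //; nra.
have H3 : 0 <= u ^+ 2 * L by nra.
nra.
Qed.
End Num.

Section Comb.
Variable n : nat.
Local Notation PT := ('I_n * 'I_n)%type.
Definition deg (g : rel 'I_n) (U : {set 'I_n}) (v : 'I_n) : nat :=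
  #|[set w in U | g v w]|.
Definition pairs (U : {set 'I_n}) : {set PT} :=
  [set p : PT | [&& p.1 \in U, p.2 \in U & (p.1 < p.2)%N]].

Lemma card_sum (A : {set 'I_n}) (P : pred 'I_n) :
  #|[set w in A | P w]| = (\sum_(w in A) P w)%N.
Proof.
rewrite -sum1_card big_mkcond /= [RHS]big_mkcond /=; apply: eq_bigr => w _.
rewrite !inE; by case: (w \in A); case: (P w).
Qed.

Lemma degsum (g : rel 'I_n) (Hi : irreflexive g) (Hs : symmetric g) (U : {set 'I_n}) :
  (\sum_(v in U) deg g U v = 2 * #|[set p in pairs U | g p.1 p.2]|)%N.
Proof.
rewrite /deg; under eq_bigr do rewrite card_sum.
have E1 : forall v w, (g v w : nat) = (((v < w)%N && g v w) + ((w < v)%N && g v w))%N.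
  move=> v w; case Hg: (g v w); last by rewrite !andbF.
  have : v != w by apply: contraTneq Hg => ->; rewrite Hi.
  by rewrite neq_ltn; case: ltngtP.
under eq_bigr do under eq_bigr do rewrite E1.
under eq_bigr do rewrite big_split /=.
rewrite big_split /=.
rewrite [X in (_ + X)%N]exchange_big /=.
have -> : (\sum_(j in U) \sum_(i in U) ((j < i)%N && g i j) =
           \sum_(i in U) \sum_(j in U) ((i < j)%N && g i j))%N.
  by apply: eq_bigr => i _; apply: eq_bigr => j _; rewrite Hs.
rewrite addnn -mul2n; congr (2 * _)%N.
rewrite -sum1_card [RHS]big_mkcond /=.
rewrite (eq_bigr (fun p : PT => if (p.1, p.2) \in [set p in pairs U | g p.1 p.2] then 1%N else 0%N)); last by move=> [a b] _.
rewrite -(pair_bigA _ (fun i j => if (i, j) \in [set p in pairs U | g p.1 p.2] then 1%N else 0%N)) /=.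
rewrite big_mkcond /=; apply: eq_bigr => v _.
case: (boolP (v \in U)) => Hv.
  rewrite big_mkcond /=; apply: eq_bigr => w _.
  rewrite !inE /= Hv.
  by case: (w \in U); case: (v < w)%N; case: (g v w).
rewrite big1 // => w _; by rewrite !inE /= (negbTE Hv).
Qed.

Definition gclique (g : rel 'I_n) (C : {set 'I_n}) :=
  forall x y, x \in C -> y \in C -> x != y -> g x y.

Lemma sub_of_card (U : {set 'I_n}) k : (k <= #|U|)%N ->
  exists2 V : {set 'I_n}, V \subset U & #|V| = k.
Proof.
move=> H; have [d Hd] : exists d, #|U| = (k + d)%N by exists (#|U| - k)%N; lia.
elim: d U Hd {H} => [|d IH] U Hd; first by exists U; rewrite ?subxx // Hd addn0.
have : (0 < #|U|)%N by rewrite Hd; lia.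
case/card_gt0P => x Hx.
have Hc : #|U :\ x| = (k + d)%N by move: (cardsD1 x U); rewrite Hx Hd; lia.
case: (IH _ Hc) => V HV HVc; exists V => //.
by apply: (subset_trans HV); apply: subD1set.
Qed.

Lemma chain (g : rel 'I_n) (s : nat -> nat) :
  irreflexive g -> symmetric g -> (0 < s 0)%N ->
  (forall j (U : {set 'I_n}), (s j.+1 <= #|U|)%N -> exists2 v, v \in U & (s j <= deg g U v)%N) ->
  forall k (U : {set 'I_n}), (s k <= #|U|)%N ->
  exists2 C : {set 'I_n}, C \subset U & gclique g C /\ #|C| = k.+1.
Proof.
move=> Hi Hs H0 Hstep; elim=> [|k IH] U HU.
  have : (0 < #|U|)%N by apply: leq_trans H0 HU.
  case/card_gt0P => x Hx; exists [set x]; first by rewrite sub1set.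
  split; last by rewrite cards1.
  by move=> a b; rewrite !inE => /eqP -> /eqP ->; rewrite eqxx.
case: (Hstep _ _ HU) => v Hv Hdeg.
case: (IH [set w in U | g v w] Hdeg) => C HC [Hcl Hcard].
have HvC : v \notin C.
  apply/negP => /(subsetP HC); by rewrite inE Hi andbF.
exists (v |: C); last split.
- rewrite subUset sub1set Hv /=; apply: (subset_trans HC).
  by apply/subsetP => w; rewrite inE => /andP [].
- move=> a b; rewrite !inE => /orP [/eqP -> | Ha] /orP [/eqP -> | Hb].
  + by rewrite eqxx.
  + by move=> _; move: (subsetP HC _ Hb); rewrite inE => /andP [].
  + by move=> _; rewrite Hs; move: (subsetP HC _ Ha); rewrite inE => /andP [].
  + exact: Hcl.
- by rewrite cardsU1 HvC Hcard.
Qed.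

Definition G := {ffun PT -> bool}.
Definition adj (f : G) : rel 'I_n :=
  fun x y => (x != y) && f (if (x < y)%N then (x, y) else (y, x)).
Definition negf (f : G) : G := [ffun t => ~~ f t].

Lemma adj_irr f : irreflexive (adj f).
Proof. by move=> x; rewrite /adj eqxx. Qed.

Lemma adj_sym f : symmetric (adj f).
Proof.
move=> x y; rewrite /adj; case: (eqVneq x y) => [->//|Hxy].
rewrite /=.
case: (ltngtP (nat_of_ord x) (nat_of_ord y)) => // /val_inj Heq.
by rewrite Heq eqxx in Hxy.
Qed.

Lemma adj_negf f x y : adj (negf f) x y = (x != y) && ~~ adj f x y.
Proof. by rewrite /adj ffunE; case: (x != y). Qed.

Lemma negfK : involutive negf.
Proof. by move=> f; apply/ffunP => t; rewrite !ffunE negbK. Qed.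

Lemma edges_adj f U :
  [set p in pairs U | adj f p.1 p.2] = [set p in pairs U | f p].
Proof.
apply/setP => [[a b]]; rewrite !inE /= /adj.
case: (boolP (a < b)%N) => Hab; last by rewrite !andbF.
rewrite !andbT; case: (a \in U); case: (b \in U) => //=.
by rewrite neq_ltn Hab.
Qed.

Section Tail.
Variable R : realType.

Lemma weight_sum (P : {set PT}) (l : R) :
  \sum_(f : G) l ^+ #|[set p in P | f p]| = 2%:R ^+ #|~: P| * (1 + l) ^+ #|P|.
Proof.
have E : forall f : G, l ^+ #|[set p in P | f p]| =
   \prod_(t : PT) (if (t \in P) && f t then l else 1).
  move=> f; rewrite -prodr_const big_mkcond /=; apply: eq_bigr => t _.
  by rewrite inE.
under eq_bigr do rewrite E.
rewrite -(bigA_distr_bigA (fun t (b : bool) => if (t \in P) && b then l else 1)) /=.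
under eq_bigr do rewrite big_bool /= andbF.
rewrite (bigID (mem P)) /= mulrC; congr (_ * _).
  rewrite -prodr_const; apply: eq_big => t; first by rewrite inE.
  by move/negbTE => ->.
rewrite -prodr_const; apply: eq_bigr => t ->; by rewrite addrC.
Qed.

Lemma tail_count (P : {set PT}) (m : nat) (l : R) : 0 < l -> l <= 1 ->
  \sum_(f : G) ((#|[set p in P | f p]| <= m)%N)%:R <=
    (2%:R ^+ #|~: P| * (1 + l) ^+ #|P|) / l ^+ m.
Proof.
move=> l0 l1; rewrite -weight_sum mulr_suml; apply: ler_sum => f _.
have lm0 : 0 < l ^+ m by apply: exprn_gt0.
case: (leqP #|[set p in P | f p]| m) => H /=.
  by rewrite ler_pdivlMr // mul1r; apply: ler_wiXn2l => //; apply: ltW.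
by apply: divr_ge0; apply: exprn_ge0; apply: ltW.
Qed.

Lemma card_pairs (U : {set 'I_n}) : (2 * #|pairs U| = #|U| * (#|U| - 1))%N.
Proof.
have Hi : irreflexive (fun x y : 'I_n => x != y) by move=> x; rewrite eqxx.
have Hs : symmetric (fun x y : 'I_n => x != y) by move=> x y; rewrite eq_sym.
have := degsum Hi Hs U.
have -> : [set p in pairs U | p.1 != p.2] = pairs U.
  apply/setP => [[a b]]; rewrite !inE /=.
  case: (boolP (a < b)%N) => H; rewrite ?andbF ?andbT //.
  by rewrite neq_ltn H andbT.
move=> <-; rewrite -sum_nat_const; apply: eq_bigr => v Hv.
rewrite /deg (cardsD1 v U) Hv add1n subSS subn0; apply: eq_card => w.
by rewrite !inE eq_sym andbC.
Qed.

Lemma bad_edges f (U : {set 'I_n}) (b : nat) :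
  [forall v in U, deg (adj f) U v < b]%N ->
  (2 * #|[set p in pairs U | f p]| <= #|U| * (b - 1))%N.
Proof.
move/forallP => H.
rewrite -edges_adj -(degsum (adj_irr f) (adj_sym f)) -sum_nat_const.
apply: leq_sum => v Hv; move: (H v); rewrite Hv /=; lia.
Qed.

Lemma bad_count (U : {set 'I_n}) (b : nat) (L : R) :
  (1 <= b)%N -> (2 * b <= #|U|)%N -> 0 <= L ->
  16 * #|U|%:R * L <= ((#|U| + 1 - 2 * b)%N%:R) ^+ 2 ->
  \sum_(f : G) ([forall v in U, deg (adj f) U v < b]%N)%:R <=
    2%:R ^+ #|{: PT}| * expR (- (2 * #|U|%:R * L)).
Proof.
move=> b1 bu L0 HE.
set u := #|U|. set N := #|pairs U|.
have HN := card_pairs U; rewrite -/u -/N in HN.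
set m := ((u * (b - 1)) %/ 2)%N.
have Hm : (2 * m <= u * (b - 1))%N by rewrite /m; lia.
have Hm2 : (u * (b - 1) <= N)%N.
  have : (2 * (u * (b - 1)) <= u * (u - 1))%N.
    rewrite mulnCA; apply: leq_mul => //; lia.
  lia.
set D := (N - (m + m))%N.
have HND : N = (m + m + D)%N by rewrite /D; lia.
have u2 : (2 <= u)%N by lia.
have N0 : (0 < N)%N by nia.
set e : R := D%:R / (2 * N%:R).
have e0 : 0 <= e by rewrite /e; apply: divr_ge0 => //; apply: mulr_ge0.
have e1 : e <= 1 / 2.
  rewrite /e ler_pdivrMr; last by rewrite mulr_gt0 // ltr0n.
  have : (D <= N)%N by lia.
  rewrite -(ler_nat R) => H; lra.
set l : R := (1 - e) / (1 + e).
have l0 : 0 < l by rewrite /l; apply: divr_gt0; lra.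
have l1 : l <= 1 by rewrite /l ler_pdivrMr; lra.
apply: (le_trans (y := \sum_(f : G) ((#|[set p in pairs U | f p]| <= m)%N)%:R)).
  apply: ler_sum => f _; case: (boolP [forall v in U, deg (adj f) U v < b]%N) => H.
    by rewrite (_ : (_ <= m)%N) //; move: (bad_edges H); rewrite -/u; lia.
  by rewrite ler0n.
apply: (le_trans (tail_count (pairs U) m l0 l1)).
have -> : 2%:R ^+ #|~: pairs U| * (1 + l) ^+ #|pairs U| / l ^+ m =
   2%:R ^+ #|{: PT}| * (((1 + l) / 2) ^+ (m + m + D) / l ^+ m).
  rewrite -(cardsC (pairs U)) -/N -HND exprD (expr_div_n (1 + l) 2).
  have h2 : (2 : R) ^+ N != 0 by apply: expf_neq0; rewrite pnatr_eq0.
  have hl : l ^+ m != 0 by apply: expf_neq0; lra.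
  by field; rewrite h2 hl.
apply: ler_wpM2l; first by apply: exprn_ge0.
apply: (le_trans (tail_exp m D e0 e1 (erefl l))).
rewrite ler_expR -HND.
have HE2 : (u * (u + 1 - 2 * b) <= 2 * D)%N.
  have : (u * (u - 1) = u * (u + 1 - 2 * b) + 2 * (u * (b - 1)))%N.
    rewrite mulnCA -mulnDr; congr (_ * _)%N; lia.
  lia.
apply: (step7 (E := (u + 1 - 2 * b)%N%:R)).
- by rewrite ltr0n.
- have := congr1 (fun k : nat => k%:R : R) HN.
  rewrite /= !natrM natrB; last by lia.
  by [].
- by rewrite -natrM -[2 * D%:R]/((2%:R : R) * D%:R) -natrM ler_nat.
- by apply: ler0n.
- exact: HE.
- by rewrite (ler_nat R 2 u).
- exact: L0.
Qed.

End Tail.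

End Comb.

Section Levels.
Variable R : realType.

Lemma powle' (x y : R) k : 0 <= x -> x <= y -> x ^+ k <= y ^+ k.
Proof. by move=> x0 xy; apply: lerXn2r; rewrite // nnegrE //; apply: le_trans xy. Qed.

Lemma ln_ge_half (k : nat) : (2 <= k)%N -> 1 / 2 <= ln (k%:R : R).
Proof.
move=> k2.
have h1 : 1 / 2 <= expR (- (1 / 2) : R) by have := expR_ge1Dx (- (1 / 2) : R); lra.
have h2 : expR (1 / 2 : R) <= 2.
  have := expRxMexpNx_1 (1 / 2 : R) => E.
  have p := expR_gt0 (1 / 2 : R).
  nra.
have -> : (1 / 2 : R) = ln (expR (1 / 2)) by rewrite expRK.
rewrite ler_ln ?posrE ?expR_gt0 //; last by rewrite ltr0n; lia.
apply: (le_trans h2); rewrite (ler_nat R 2 k); done.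
Qed.

Variable L : R.
Hypothesis L12 : 1 / 2 <= L.

Definition aa (j : nat) : R := (256 * 2 ^+ j - 192 * (3 / 2) ^+ j) * L.
Definition ss (j : nat) : nat := Num.truncn (aa j).

Lemma B_le_A j : (3 / 2 : R) ^+ j <= 2 ^+ j.
Proof. by apply: powle'; lra. Qed.

Lemma A_le_B2 j : (2 : R) ^+ j <= ((3 / 2) ^+ j) ^+ 2.
Proof. by rewrite exprAC; apply: powle'; lra. Qed.

Lemma aa_ge j : 64 * 2 ^+ j * L <= aa j.
Proof.
have HL := L12.
rewrite /aa; have h := B_le_A j.
have : 0 <= (2 ^+ j - (3 / 2) ^+ j) * L by apply: mulr_ge0; lra.
nra.
Qed.

Lemma aa_le j : aa j <= 256 * 2 ^+ j * L.
Proof.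
have HL := L12.
rewrite /aa.
have : 0 <= (3 / 2 : R) ^+ j * L by apply: mulr_ge0; [apply: exprn_ge0; lra | lra].
lra.
Qed.

Lemma aa_ge0 j : 0 <= aa j.
Proof.
have HL := L12.
apply: le_trans (aa_ge j).
have : 0 <= (2 : R) ^+ j * L by apply: mulr_ge0; [apply: exprn_ge0 | lra].
lra.
Qed.

Lemma aa_step j : aa j.+1 - 2 * aa j = 64 * (3 / 2) ^+ j.+1 * L.
Proof. by rewrite /aa !exprS; field. Qed.

Lemma ss_le j : (ss j)%:R <= aa j.
Proof. have HL := L12. by have /andP [] := truncn_itv (aa_ge0 j). Qed.

Lemma ss_gt j : aa j < (ss j).+1%:R.
Proof. have HL := L12. by have /andP [] := truncn_itv (aa_ge0 j). Qed.

Lemma ss_big j : (j < ss j)%N.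
Proof.
have HL := L12.
have h1 := aa_ge j.
have h2 := ss_gt j.
have h3 : (j.+1%:R : R) <= 2 ^+ j by rewrite -natrX ler_nat; apply: ltn_expl.
have h4 : 0 <= 2 ^+ j * (L - 1 / 2) by apply: mulr_ge0; [apply: exprn_ge0 | lra].
rewrite -(ltr_nat R); rewrite -natr1 in h2 h3. rewrite -natr1 in h3. rewrite mulrBr in h4. rewrite -mulrA in h1. have := ler0n R j. lra.
Qed.

Lemma ss_ge3 j : (3 <= ss j.+1)%N.
Proof.
have HL := L12.
have h1 := aa_ge j.+1.
have h2 := ss_gt j.+1.
have h3 : (2 : R) <= 2 ^+ j.+1 by rewrite -natrX ler_nat; apply: (leq_pexp2l (m := 2) (n1 := 1)).
have h4 : 0 <= 2 ^+ j.+1 * (L - 1 / 2) by apply: mulr_ge0; [apply: exprn_ge0 | lra].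
rewrite -(ler_nat R); rewrite -natr1 in h2. rewrite mulrBr in h4. rewrite -mulrA in h1. lra.
Qed.

Lemma ss0 : (1 <= ss 0)%N.
Proof.
have HL := L12.
have h1 := aa_ge 0; have h2 := ss_gt 0; rewrite expr0 in h1.
rewrite -(ler_nat R); rewrite -natr1 in h2; lra.
Qed.

Lemma ss_level j :
  [/\ (1 <= ss j)%N, (2 * ss j <= ss j.+1)%N &
   16 * (ss j.+1)%:R * L <= ((ss j.+1 + 1 - 2 * ss j)%N%:R) ^+ 2].
Proof.
have HL := L12.
have st := aa_step j.
have g1 := ss_gt j.+1. have l1 := ss_le j.+1.
have l0 := ss_le j.
have B0 : 0 < (3 / 2 : R) ^+ j.+1 by apply: exprn_gt0; lra.
have HE : 64 * (3 / 2) ^+ j.+1 * L < (ss j.+1)%:R + 1 - 2 * (ss j)%:R.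
  rewrite -natr1 in g1; lra.
have H2 : (2 * ss j <= ss j.+1)%N.
  have : (2 * ss j < ss j.+1 + 1)%N.
    rewrite -(ltr_nat R) natrD natrM.
    have : 0 < 64 * (3 / 2) ^+ j.+1 * L by nra.
    lra.
  lia.
split => //.
- have := ss_big j; lia.
rewrite natrB; last by lia.
rewrite natrD natrM.
have E2 : (64 * (3 / 2) ^+ j.+1 * L) ^+ 2 <= ((ss j.+1)%:R + 1 - 2%:R * (ss j)%:R) ^+ 2.
  apply: powle'; last by apply: ltW.
  nra.
apply: le_trans E2.
have A2 := A_le_B2 j.+1.
have al := aa_le j.+1.
have L0 : 0 <= L by lra.
have : 16 * (ss j.+1)%:R * L <= 16 * (256 * 2 ^+ j.+1 * L) * L.
  apply: ler_wpM2r => //; lra.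
have : 4096 * 2 ^+ j.+1 * L ^+ 2 <= 4096 * ((3 / 2) ^+ j.+1) ^+ 2 * L ^+ 2.
  apply: ler_wpM2r; first by apply: exprn_ge0.
  lra.
rewrite !exprMn; nra.
Qed.
End Levels.

Section Exist.
Variable R : realType.

Lemma le_sum_term (I : finType) (P : pred I) (F : I -> R) i :
  P i -> (forall j, P j -> 0 <= F j) -> F i <= \sum_(j | P j) F j.
Proof.
move=> Pi H; rewrite (bigD1 i) //= lerDl; apply: sumr_ge0 => j /andP [Pj _].
exact: H.
Qed.

Lemma binle (k u : nat) : ('C(k, u) <= k ^ u)%N.
Proof.
apply: (leq_trans (n := ('C(k, u) * u`!)%N)); first by rewrite leq_pmulr ?fact_gt0.
rewrite bin_ffact; elim: u k => [|u IH] k //.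
rewrite ffactnS expnS; apply: leq_mul => //; apply: leq_trans (IH _) _.
by case: u {IH} => [|u] //; rewrite leq_exp2r // leq_pred.
Qed.

Variable n : nat.
Hypothesis n2 : (2 <= n)%N.

Definition LL : R := ln (n%:R).

Lemma LL12 : 1 / 2 <= LL.
Proof. exact: ln_ge_half. Qed.

Definition bd (f : G n) (j : nat) (U : {set 'I_n}) : R :=
  ([forall v in U, deg (adj f) U v < ss LL j]%N)%:R.

Definition goodb (f : G n) : bool :=
  [forall j : 'I_n, [forall U : {set 'I_n}, (#|U| == ss LL j.+1) ==>
    ([exists v in U, (ss LL j <= deg (adj f) U v)%N] &&
     [exists v in U, (ss LL j <= deg (adj (negf f)) U v)%N])]].

Lemma bad_one (f : G n) : ~~ goodb f ->
  1 <= \sum_(j : 'I_n) \sum_(U : {set 'I_n} | #|U| == ss LL j.+1) (bd f j U + bd (negf f) j U).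
Proof.
rewrite negb_forall => /existsP [j]; rewrite negb_forall => /existsP [U].
rewrite negb_imply => /andP [HU Hn].
have pos : forall g j U, 0 <= bd g j U by move=> *; apply: ler0n.
have H2 := le_sum_term (P := fun V : {set 'I_n} => #|V| == ss LL j.+1) (F := fun V =>
   (bd f j V + bd (negf f) j V)) HU (fun V _ => addr_ge0 (pos _ _ _) (pos _ _ _)).
have H3 := le_sum_term (P := xpredT) (F := fun j : 'I_n =>
  \sum_(U : {set 'I_n} | #|U| == ss LL j.+1) (bd f j U + bd (negf f) j U)) (i := j) isT
  (fun i _ => sumr_ge0 _ (fun V _ => addr_ge0 (pos _ _ _) (pos _ _ _))).
apply: le_trans H3; apply: le_trans H2 => /=.
rewrite negb_and !negb_exists_in in Hn; rewrite /bd.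
have E : forall g : G n, [forall (v | v \in U), ~~ (ss LL j <= deg (adj g) U v)%N] ->
   [forall v in U, deg (adj g) U v < ss LL j]%N.
  move=> g /forallP Hg; apply/forallP => v; move: (Hg v).
  by rewrite ltnNge.
case/orP: Hn => H.
  by rewrite (E _ H) lerDl ler0n.
by rewrite (E _ H) lerDr ler0n.
Qed.


Lemma negf_inj : injective (@negf n).
Proof. exact: (can_inj (@negfK n)). Qed.

Lemma expLL (k : nat) : expR (k%:R * LL) = (n%:R) ^+ k.
Proof.
rewrite expRM_natl /LL lnK // posrE ltr0n; lia.
Qed.

Lemma exists_goodb : exists f : G n, goodb f.
Proof.
case: (pickP goodb) => [f Hf | H]; first by exists f.
exfalso.
have L12 := LL12.
have L0 : 0 <= LL by lra.
set c : R := 2%:R ^+ #|{: 'I_n * 'I_n}|.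
have c0 : 0 < c by apply: exprn_gt0.
have Htot : \sum_(f : G n) (1 : R) = c.
  by rewrite sumr_const card_ffun card_bool natrX.
have Hle : c <= \sum_(f : G n) \sum_(j : 'I_n)
     \sum_(U : {set 'I_n} | #|U| == ss LL j.+1) (bd f j U + bd (negf f) j U).
  rewrite -Htot; apply: ler_sum => f _; apply: bad_one; by rewrite H.
rewrite exchange_big /= in Hle.
have n0 : (0 : R) < n%:R by rewrite ltr0n; lia.
have Hj : forall j : 'I_n, \sum_(f : G n) \sum_(U : {set 'I_n} | #|U| == ss LL j.+1)
     (bd f j U + bd (negf f) j U) <= 2 * c / n%:R ^+ 3.
  move=> j.
  rewrite exchange_big /=.
  set u := ss LL j.+1.
  have [lb1 lb2 lb3] := ss_level LL12 j.
  have u3 : (3 <= u)%N := ss_ge3 LL12 j.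
  have HU : forall U : {set 'I_n}, #|U| == u ->
     \sum_(f : G n) (bd f j U + bd (negf f) j U) <= 2 * (c * expR (- (2 * u%:R * LL))).
    move=> U /eqP HU.
    rewrite big_split /=.
    have -> : \sum_(f : G n) bd (negf f) j U = \sum_(f : G n) bd f j U.
      by symmetry; apply: (reindex_inj negf_inj).
    have Hb : \sum_(f : G n) bd f j U <= c * expR (- (2 * u%:R * LL)).
      rewrite /bd -HU; apply: bad_count => //; by rewrite HU.
    lra.
  apply: le_trans (ler_sum _ HU) _.
  rewrite sumr_const -cardsE card_draws card_ord.
  apply: le_trans (_ : 2 * (c * expR (- (2 * u%:R * LL))) *+ (n ^ u)%N <= _).
    apply: ler_wpMn2l; last by apply: binle.
    by apply: mulr_ge0 => //; apply: mulr_ge0; [apply: ltW | apply: expR_ge0].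
  rewrite -mulr_natr natrX -expLL -mulrA -mulrA -expRD.
  have -> : - (2 * u%:R * LL) + u%:R * LL = - (u%:R * LL) by ring.
  rewrite mulrA ler_pM2l; last by apply: mulr_gt0.
  rewrite -expLL -expRN ler_expR lerN2; apply: ler_wpM2r => //.
  by rewrite ler_nat.
have Hfin := le_trans Hle (ler_sum _ (fun j _ => Hj j)).
rewrite sumr_const card_ord in Hfin.
have n3 : (2 * n%:R : R) < n%:R ^+ 3.
  have : (2 * n < n ^ 3)%N by rewrite expnS; nia.
  by rewrite -(ltr_nat R) natrM natrX.
have : c * n%:R ^+ 3 <= 2 * c * n%:R.
  rewrite -(mulr_natr (2 * c / n%:R ^+ 3) n) in Hfin.
  have n3p : 0 < n%:R ^+ 3 :> R by apply: exprn_gt0.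
  have e3 : 2 * c / n%:R ^+ 3 * n%:R = (2 * c * n%:R) / n%:R ^+ 3.
    by rewrite mulrAC.
  by rewrite e3 ler_pdivlMr in Hfin.
have := mulr_gt0 c0 (_ : 0 < n%:R ^+ 3 - 2 * n%:R); nra.
Qed.
End Exist.

Section Main.
Variable R : realType.

Lemma step_hyp n (n2 : (2 <= n)%N) (f : G n) (g : rel 'I_n) :
  goodb R f -> (g = adj f \/ g = adj (negf f)) ->
  forall j (U : {set 'I_n}), (ss (LL R n) j.+1 <= #|U|)%N ->
    exists2 v, v \in U & (ss (LL R n) j <= deg g U v)%N.
Proof.
move=> Hf Hg j U HU.
have L12 := LL12 R n2.
case: (ltnP j n) => jn; last first.
  have := ss_big L12 j.+1; have := max_card U; rewrite card_ord; lia.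
case: (sub_of_card HU) => V HVU HV.
move/forallP: Hf => /(_ (Ordinal jn)) /forallP /(_ V) /implyP /=.
rewrite HV eqxx => /(_ isT) /andP [H1 H2].
have mono : forall v, (deg g V v <= deg g U v)%N.
  move=> v; apply: subset_leq_card; apply/subsetP => w; rewrite !inE.
  by case/andP => /(subsetP HVU) -> ->.
case: Hg => Hg; rewrite Hg in mono *.
  case/existsP: H1 => v /andP [Hv Hd]; exists v; first exact: (subsetP HVU).
  by apply: leq_trans Hd (mono _).
case/existsP: H2 => v /andP [Hv Hd]; exists v; first exact: (subsetP HVU).
by apply: leq_trans Hd (mono _).
Qed.

Lemma ln2_le1 : ln (2 : R) <= 1.
Proof.
have h : (-1 : R) < 1 by lra.
by have := @le_ln1Dx R 1 h; rewrite (_ : 1 + 1 = 2).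
Qed.

End Main.

Unset Implicit Arguments.

Theorem proposition2p1 (R : realType) (n : nat) (hn : (0 < n)%N) :
  exists e : rel 'I_n, simple_graph e /\
    forall r : R, 0 < r ->
      let m := powR 2 (r + 8) * log2 (n%:R : R) in
      0 < m -> locally_ramsey e m r.
Proof.
case: (leqP 2 n) => n2; last first.
  exists (fun _ _ => false); split; first by split.
  move=> r r0 /=; have -> : n = 1%N by lia.
  by rewrite /log2 ln1 mul0r mulr0 ltxx.
have [f Hf] := exists_goodb R n2.
exists (adj f); split; first by split; [apply: adj_irr | apply: adj_sym].
move=> r r0 m m0 A HA.
set L := LL R n.
have L12 : 1 / 2 <= L := LL12 R n2.
set t := Num.truncn r.
have rt : r < t.+1%:R := truncnS_gt r.
have tr : t%:R <= r by rewrite truncn_le ltW.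
have Hs : (ss L t <= #|A|)%N.
  rewrite -(ler_nat R); apply: le_trans HA.
  apply: le_trans (ss_le L12 t) _.
  apply: le_trans (aa_le L12 t) _.
  rewrite /m /log2.
  have l2p : 0 < ln (2 : R) by apply: ln_gt0; lra.
  have l21 := ln2_le1 R.
  have P1 : 256 * 2 ^+ t <= powR 2 (r + 8).
    rewrite (_ : 256 * 2 ^+ t = powR 2 (t + 8)%:R); last first.
      rewrite powR_mulrn; last lra.
      by rewrite exprD; ring.
    apply: ler_powR; first lra.
    by rewrite natrD; lra.
  have L0 : 0 <= L by lra.
  have P2 : L <= ln n%:R / ln 2.
    rewrite ler_pdivlMr // (_ : ln n%:R = L) //.
    have h1 : 0 <= 1 - ln (2 : R) by lra.
    have := mulr_ge0 L0 h1; rewrite mulrBr mulr1; lra.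
  apply: ler_pM => //.
  by apply: mulr_ge0; [lra | apply: exprn_ge0].
split.
- have [C HC [Hcl Hcard]] := chain (adj_irr f) (adj_sym f) (ss0 L12)
     (step_hyp n2 Hf (or_introl erefl)) Hs.
  exists C => //; split; first exact: Hcl.
  by rewrite Hcard; apply: ltW.
- have [C HC [Hcl Hcard]] := chain (adj_irr (negf f)) (adj_sym (negf f)) (ss0 L12)
     (step_hyp n2 Hf (or_intror erefl)) Hs.
  exists C => //; split; last by rewrite Hcard; apply: ltW.
  move=> x y Hx Hy; case: (eqVneq x y) => [->|Hxy]; first by rewrite adj_irr.
  by move: (Hcl x y Hx Hy Hxy); rewrite adj_negf Hxy.
Qed.
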